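(* Let $p,q\in\mathbb{N}$, $\alpha_1,\dots,\alpha_p,\beta_1,\dots,\beta_q\in\mathbb{R}$, $A_1,\dots,A_p,B_1,\dots,B_q>0$, with $\sum_{k=1}^q\beta_k-\sum_{j=1}^p\alpha_j+\frac{p-q}{2}>0$ and $\sum_{j=1}^pA_j=\sum_{k=1}^qB_k$, and with $\psi_{n,m}=\frac{\prod_{i=1}^p\Gamma(\alpha_i+(n+m)A_i)}{\prod_{j=1}^q\Gamma(\beta_j+(n+m)B_j)}$ satisfying $\psi_{n,2}<\psi_{n,1}$ and $\psi_{n,1}^2<\psi_{n,0}\psi_{n,2}$ for all $n\in\mathbb{N}_0$. For $\sigma>0$ and $z\in(0,1)$ let $\Xi(\sigma)=\Xi_z(\sigma)={}_{p+1}\Psi_q\Big[_{(\beta_1,B_1),\dots,(\beta_q,B_q)}^{(\sigma,1),(\alpha_1,A_1),\dots,(\alpha_p,A_p)}\Big|z\Big]$. Then for each $z\in(0,1)$ the function $\sigma\mapsto\Xi(\sigma)$ is log-convex on $(0,\infty)$, and $$\Xi(\sigma)\,\Xi(\sigma+2)-\Xi(\sigma+1)^2\ge0$$ for all $\sigma\in(0,\infty)$ and $z\in(0,1)$.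
   Context: The Fox-Wright function with parameters $(a_i,C_i)_{i=1}^{r}$ upstairs and $(b_j,D_j)_{j=1}^s$ downstairs ($C_i,D_j>0$) is ${}_r\Psi_s\Big[_{(b_1,D_1),\dots,(b_s,D_s)}^{(a_1,C_1),\dots,(a_r,C_r)}\Big|z\Big]=\sum_{k=0}^\infty\frac{\prod_{i=1}^r\Gamma(a_i+kC_i)}{\prod_{j=1}^s\Gamma(b_j+kD_j)}\frac{z^k}{k!}$. *)

(* Defs.v *)
From Stdlib Require Import Reals List Factorial.
From Coquelicot Require Import Coquelicot.
Import ListNotations.
Open Scope R_scope.

Definition prodR (n : nat) (f : nat -> R) : R :=
  fold_right Rmult 1 (map f (seq 0 n)).
Definition sumR (n : nat) (f : nat -> R) : R :=
  fold_right Rplus 0 (map f (seq 0 n)).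

(* Euler's Gamma function on the reals, via the Gauss product formula
   Gamma(x) = lim_n n! n^x / (x (x+1) ... (x+n)).
   (At the poles x = 0,-1,-2,... the sequence is eventually
   (stuff)/0 and this total definition returns a junk value.) *)
Definition Gamma (x : R) : R :=
  real (Lim_seq (fun n : nat =>
    INR (fact n) * Rpower (INR n) x / prodR (S n) (fun k => x + INR k))).

Definition FoxWright (r s : nat) (a C : nat -> R) (b D : nat -> R) (z : R) : R :=
  Series (fun k : nat =>
    prodR r (fun i => Gamma (a i + INR k * C i))
    / prodR s (fun j => Gamma (b j + INR k * D j))
    * z ^ k / INR (fact k)).

(* Upper parameters ((sigma,1),(alpha_1,A_1),...,(alpha_p,A_p)) as functions
   on indices 0..p. *)
Definition shift_param (first : R) (rest : nat -> R) (i : nat) : R :=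
  match i with O => first | S i' => rest i' end.

Definition log_convex_on (I : R -> Prop) (f : R -> R) : Prop :=
  (forall x, I x -> 0 < f x) /\
  (forall x y t, I x -> I y -> 0 <= t <= 1 ->
     ln (f (t * x + (1 - t) * y)) <= t * ln (f x) + (1 - t) * ln (f y)).

(* Main.v *)
Require Import Defs.
From Stdlib Require Import Reals List Lra Lia Factorial.
From Coquelicot Require Import Coquelicot.
Import ListNotations.
Open Scope R_scope.

Lemma prodR_S n f : prodR (S n) f = prodR n f * f n.
Proof.
  unfold prodR. rewrite seq_S, map_app, fold_right_app. simpl.
  rewrite Rmult_1_r. generalize (f n). induction (map f (seq 0 n)); intros; simpl.
  - ring.
  - rewrite IHl. ring.
Qed.

Lemma sumR_S n f : sumR (S n) f = sumR n f + f n.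
Proof.
  unfold sumR. rewrite seq_S, map_app, fold_right_app. simpl.
  rewrite Rplus_0_r. generalize (f n). induction (map f (seq 0 n)); intros; simpl.
  - ring.
  - rewrite IHl. ring.
Qed.

Lemma prodR_0 f : prodR 0 f = 1. Proof. reflexivity. Qed.
Lemma sumR_0 f : sumR 0 f = 0. Proof. reflexivity. Qed.

Lemma prodR_front n f : prodR (S n) f = f 0%nat * prodR n (fun k => f (S k)).
Proof.
  unfold prodR. simpl. f_equal. rewrite <- seq_shift, map_map. reflexivity.
Qed.

Lemma sumR_front n f : sumR (S n) f = f 0%nat + sumR n (fun k => f (S k)).
Proof.
  unfold sumR. simpl. f_equal. rewrite <- seq_shift, map_map. reflexivity.
Qed.

Lemma prodR_ext n f g : (forall k, (k < n)%nat -> f k = g k) -> prodR n f = prodR n g.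
Proof.
  induction n; intros H; [reflexivity|]. rewrite !prodR_S, IHn, H; auto.
Qed.

Lemma sumR_ext n f g : (forall k, (k < n)%nat -> f k = g k) -> sumR n f = sumR n g.
Proof.
  induction n; intros H; [reflexivity|]. rewrite !sumR_S, IHn, H; auto.
Qed.

Lemma prodR_pos n f : (forall k, (k < n)%nat -> 0 < f k) -> 0 < prodR n f.
Proof.
  induction n; intros H; [unfold prodR; simpl; lra|]. rewrite prodR_S.
  apply Rmult_lt_0_compat; auto.
Qed.

Lemma ln_prodR n f : (forall k, (k < n)%nat -> 0 < f k) ->
  ln (prodR n f) = sumR n (fun k => ln (f k)).
Proof.
  induction n; intros H. { unfold prodR, sumR; simpl. apply ln_1. }
  rewrite prodR_S, sumR_S, ln_mult, IHn; auto. apply prodR_pos; auto.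
Qed.

Lemma sumR_le n f g : (forall k, (k < n)%nat -> f k <= g k) -> sumR n f <= sumR n g.
Proof.
  induction n; intros H; [unfold sumR; simpl; lra|]. rewrite !sumR_S.
  apply Rplus_le_compat; auto.
Qed.

Lemma sumR_lin n t f g : sumR n (fun k => t * f k + (1 - t) * g k) = t * sumR n f + (1-t) * sumR n g.
Proof.
  induction n; [unfold sumR; simpl; ring|]. rewrite !sumR_S, IHn. ring.
Qed.

Lemma young t a b : 0 <= t <= 1 -> exp (t * a + (1 - t) * b) <= t * exp a + (1 - t) * exp b.
Proof.
  intros Ht. set (m := t * a + (1 - t) * b).
  assert (Ea : exp a = exp m * exp (a - m)) by (rewrite <- exp_plus; f_equal; ring).
  assert (Eb : exp b = exp m * exp (b - m)) by (rewrite <- exp_plus; f_equal; ring).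
  pose proof (exp_ineq1_le (a - m)). pose proof (exp_ineq1_le (b - m)).
  pose proof (exp_pos m).
  rewrite Ea, Eb.
  assert (t * (exp m * exp (a - m)) + (1 - t) * (exp m * exp (b - m)) >=
          t * (exp m * (1 + (a - m))) + (1 - t) * (exp m * (1 + (b - m)))).
  { apply Rle_ge. apply Rplus_le_compat; apply Rmult_le_compat_l; try lra;
    apply Rmult_le_compat_l; lra. }
  assert (t * (exp m * (1 + (a - m))) + (1 - t) * (exp m * (1 + (b - m))) = exp m)
    by (unfold m; ring).
  lra.
Qed.

Lemma ln_concave t u v : 0 <= t <= 1 -> 0 < u -> 0 < v ->
  t * ln u + (1 - t) * ln v <= ln (t * u + (1 - t) * v).
Proof.
  intros Ht Hu Hv. rewrite <- (ln_exp (t * ln u + (1 - t) * ln v)).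
  apply ln_le. apply exp_pos.
  pose proof (young t (ln u) (ln v) Ht). rewrite !exp_ln in H; auto.
Qed.

Lemma ln_diff u v : 0 < u -> 0 < v -> 1 - u / v <= ln v - ln u <= v / u - 1.
Proof.
  intros Hu Hv.
  assert (K : forall y, 0 < y -> ln y <= y - 1).
  { intros y Hy. pose proof (exp_ineq1_le (ln y)). rewrite exp_ln in H; lra. }
  split.
  - pose proof (K (u / v)). rewrite ln_div in H; try lra.
    assert (0 < u / v) by (apply Rdiv_lt_0_compat; lra). specialize (H H0). lra.
  - pose proof (K (v / u)). rewrite ln_div in H; try lra.
    assert (0 < v / u) by (apply Rdiv_lt_0_compat; lra). specialize (H H0). lra.
Qed.

Definition gs (n : nat) (x : R) :=
  INR (fact n) * Rpower (INR n) x / prodR (S n) (fun k => x + INR k).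
Definition L (n : nat) (x : R) :=
  ln (INR (fact n)) + x * ln (INR n) - sumR (S n) (fun k => ln (x + INR k)).

Lemma INR_fact_pos n : 0 < INR (fact n).
Proof. apply lt_0_INR, lt_O_fact. Qed.

Lemma gs_exp n x : (0 < n)%nat -> 0 < x -> gs n x = exp (L n x).
Proof.
  intros Hn Hx.
  assert (Hp : 0 < prodR (S n) (fun k => x + INR k)).
  { apply prodR_pos; intros. pose proof (pos_INR k). lra. }
  assert (Hg : 0 < gs n x).
  { unfold gs. apply Rdiv_lt_0_compat; auto. apply Rmult_lt_0_compat.
    apply INR_fact_pos. unfold Rpower. apply exp_pos. }
  rewrite <- (exp_ln _ Hg). f_equal. unfold gs, L. unfold Rdiv.
  rewrite ln_mult, ln_mult, ln_Rinv, ln_prodR; auto.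
  - unfold Rpower. rewrite ln_exp. ring.
  - intros. pose proof (pos_INR k). lra.
  - apply INR_fact_pos.
  - unfold Rpower. apply exp_pos.
  - apply Rmult_lt_0_compat. apply INR_fact_pos. unfold Rpower. apply exp_pos.
  - apply Rinv_0_lt_compat; auto.
Qed.

Lemma L_incr n x : 0 < x ->
  0 <= L (S (S n)) x - L (S n) x <= (x + x * x) / ((INR n + 1) * (INR n + 1)).
Proof.
  intros Hx.
  assert (E : L (S (S n)) x - L (S n) x =
     x * (ln (INR n + 2) - ln (INR n + 1)) - (ln (x + INR n + 2) - ln (INR n + 2))).
  { unfold L. rewrite (sumR_S (S (S n))).
    replace (fact (S (S n))) with (S (S n) * fact (S n))%nat by reflexivity.
    rewrite mult_INR, ln_mult; [| apply lt_0_INR; lia | apply INR_fact_pos].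
    rewrite !S_INR.
    replace (INR n + 1 + 1) with (INR n + 2) by ring.
    replace (x + (INR n + 2 + 1)) with (x + INR n + 2 + 1) by ring.
    replace (x + (INR n + 2)) with (x + INR n + 2) by ring.
    ring. }
  rewrite E.
  pose proof (pos_INR n) as Hn.
  destruct (ln_diff (INR n + 1) (INR n + 2)) as [a1 a2]; try lra.
  destruct (ln_diff (INR n + 2) (x + INR n + 2)) as [b1 b2]; try lra.
  set (a := ln (INR n + 2) - ln (INR n + 1)) in *.
  set (b := ln (x + INR n + 2) - ln (INR n + 2)) in *.
  set (m := INR n + 1) in *.
  replace (INR n + 2) with (m + 1) in * by (unfold m; ring).
  replace (x + INR n + 2) with (x + m + 1) in * by (unfold m; ring).
  assert (Hm : 1 <= m) by (unfold m; lra).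
  replace (1 - m / (m + 1)) with (1 / (m + 1)) in a1 by (field; lra).
  replace ((m + 1) / m - 1) with (1 / m) in a2 by (field; lra).
  replace (1 - (m + 1) / (x + m + 1)) with (x / (x + m + 1)) in b1 by (field; lra).
  replace ((x + m + 1) / (m + 1) - 1) with (x / (m + 1)) in b2 by (field; lra).
  split.
  - assert (x * (1 / (m + 1)) <= x * a) by (apply Rmult_le_compat_l; lra).
    replace (x * (1 / (m + 1))) with (x / (m + 1)) in H by (field; lra). lra.
  - assert (x * a <= x * (1 / m)) by (apply Rmult_le_compat_l; lra).
    assert (x * (1 / m) - x / (x + m + 1) <= (x + x * x) / (m * m)).
    { replace (x * (1 / m) - x / (x + m + 1)) with ((x + x * x) / (m * (x + m + 1))) by (field; lra).
      apply Rmult_le_compat_l; [nra|]. apply Rinv_le_contravar; nra. }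
    lra.
Qed.

Lemma L_bound x : 0 < x -> forall n,
  L (S n) x <= L 1 x + 2 * (x + x * x) - 2 * (x + x * x) / (INR n + 1).
Proof.
  intros Hx n. set (C := x + x * x). assert (HC : 0 < C) by (unfold C; nra).
  induction n.
  - simpl. replace (0 + 1) with 1 by ring. unfold Rdiv. rewrite Rinv_1. lra.
  - destruct (L_incr n x Hx) as [_ H]. fold C in H.
    rewrite S_INR. pose proof (pos_INR n).
    assert (C / ((INR n + 1) * (INR n + 1)) <= 2 * C / (INR n + 1) - 2 * C / (INR n + 1 + 1)).
    { replace (2 * C / (INR n + 1) - 2 * C / (INR n + 1 + 1)) with
        (C * / ((INR n + 1) * ((INR n + 2) / 2))) by (field; lra).
      unfold Rdiv at 1. apply Rmult_le_compat_l; [lra|].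
      apply Rinv_le_contravar; nra. }
    lra.
Qed.

Lemma Gamma_spec x : 0 < x ->
  0 < Gamma x /\ is_lim_seq (fun n => L (S n) x) (ln (Gamma x)).
Proof.
  intros Hx.
  assert (Hgr : Un_growing (fun n => L (S n) x)).
  { intros n. destruct (L_incr n x Hx). lra. }
  assert (Hub : has_ub (fun n => L (S n) x)).
  { exists (L 1 x + 2 * (x + x * x)). intros y [n ->].
    pose proof (L_bound x Hx n). pose proof (pos_INR n).
    assert (0 <= 2 * (x + x * x) / (INR n + 1)) by (apply Rdiv_le_0_compat; nra). lra. }
  destruct (growing_cv _ Hgr Hub) as [l Hl].
  apply is_lim_seq_Reals in Hl.
  assert (Hg : is_lim_seq (fun n => gs n x) (exp l)).
  { apply is_lim_seq_incr_1.
    apply is_lim_seq_ext with (fun n => exp (L (S n) x)).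
    { intros n. rewrite gs_exp; auto. lia. }
    apply is_lim_seq_continuous; auto. apply derivable_continuous_pt, derivable_pt_exp. }
  assert (E : Gamma x = exp l).
  { change (Gamma x) with (real (Lim_seq (fun n => gs n x))).
    rewrite (is_lim_seq_unique _ _ Hg). reflexivity. }
  rewrite E, ln_exp. split; auto. apply exp_pos.
Qed.

Lemma L_convex n x y t : 0 < x -> 0 < y -> 0 <= t <= 1 ->
  L n (t * x + (1 - t) * y) <= t * L n x + (1 - t) * L n y.
Proof.
  intros Hx Hy Ht. unfold L.
  assert (sumR (S n) (fun k => t * ln (x + INR k) + (1 - t) * ln (y + INR k)) <=
          sumR (S n) (fun k => ln (t * x + (1 - t) * y + INR k))).
  { apply sumR_le. intros k _. pose proof (pos_INR k).
    replace (t * x + (1 - t) * y + INR k) with (t * (x + INR k) + (1 - t) * (y + INR k)) by ring.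
    apply ln_concave; lra. }
  rewrite sumR_lin in H. nra.
Qed.

Lemma lnGamma_convex x y t : 0 < x -> 0 < y -> 0 <= t <= 1 ->
  ln (Gamma (t * x + (1 - t) * y)) <= t * ln (Gamma x) + (1 - t) * ln (Gamma y).
Proof.
  intros Hx Hy Ht.
  assert (Hm : 0 < t * x + (1 - t) * y).
  { destruct (Req_dec t 0). subst. lra. assert (0 < t) by lra. nra. }
  destruct (Gamma_spec _ Hm) as [_ Lm].
  destruct (Gamma_spec _ Hx) as [_ Lx].
  destruct (Gamma_spec _ Hy) as [_ Ly].
  assert (Lv : is_lim_seq (fun n => t * L (S n) x + (1 - t) * L (S n) y)
                 (t * ln (Gamma x) + (1 - t) * ln (Gamma y))).
  { apply is_lim_seq_plus'; apply (is_lim_seq_scal_l _ _ (Finite _)); auto. }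
  pose proof (is_lim_seq_le _ _ _ _ (fun n => L_convex (S n) x y t Hx Hy Ht) Lm Lv).
  exact H.
Qed.

Lemma Gamma_succ x : 0 < x -> Gamma (x + 1) = x * Gamma x.
Proof.
  intros Hx.
  assert (Hx1 : 0 < x + 1) by lra.
  destruct (Gamma_spec _ Hx) as [Gp Lx].
  destruct (Gamma_spec _ Hx1) as [Gp1 Lx1].
  assert (E : forall n, L (S n) (x + 1) = L (S n) x + ln x + (ln (INR n + 1) - ln (x + INR n + 2))).
  { intros n. unfold L.
    assert (Hs : sumR (S (S n)) (fun k => ln (x + 1 + INR k)) =
       sumR (S (S n)) (fun k => ln (x + INR k)) + ln (x + INR n + 2) - ln x).
    { rewrite (sumR_ext _ _ (fun k => ln (x + INR (S k)))).
      2:{ intros k _. rewrite S_INR. f_equal. ring. }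
      pose proof (sumR_front (S (S n)) (fun k => ln (x + INR k))).
      rewrite sumR_S in H. simpl (INR 0) in H. rewrite Rplus_0_r in H.
      replace (x + INR (S (S n))) with (x + INR n + 2) in H by (rewrite !S_INR; ring). lra. }
    rewrite Hs, !S_INR. ring. }
  assert (Le : is_lim_seq (fun n => ln (INR n + 1) - ln (x + INR n + 2)) 0).
  { apply is_lim_seq_le_le with (fun n => - ((x + 1) * / INR (S n))) (fun n => 0).
    - intros n. pose proof (pos_INR n). rewrite S_INR.
      destruct (ln_diff (INR n + 1) (x + INR n + 2)) as [a b]; try lra.
      replace ((x + INR n + 2) / (INR n + 1) - 1) with ((x + 1) * / (INR n + 1)) in b by (field; lra).
      split; [lra|].
      assert (0 <= 1 - (INR n + 1) / (x + INR n + 2)).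
      { replace (1 - (INR n + 1) / (x + INR n + 2)) with ((x + 1) / (x + INR n + 2)) by (field; lra).
        apply Rdiv_le_0_compat; lra. }
      lra.
    - pose proof (is_lim_seq_scal_l _ (x+1) _ (proj1 (is_lim_seq_incr_1 _ _) (is_lim_seq_inv _ _ is_lim_seq_INR ltac:(discriminate)))) as H0.
      pose proof (proj1 (is_lim_seq_opp _ _) H0) as H1.
      replace (Rbar_opp (Rbar_mult (x + 1) (Rbar_inv p_infty))) with (Finite 0) in H1.
      exact H1. simpl. f_equal. ring.
    - apply is_lim_seq_const. }
  assert (L2 : is_lim_seq (fun n => L (S n) (x + 1)) (ln (Gamma x) + ln x + 0)).
  { apply is_lim_seq_ext with (fun n => L (S n) x + ln x + (ln (INR n + 1) - ln (x + INR n + 2))).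
    { intros; rewrite E; auto. }
    apply is_lim_seq_plus'; auto. apply is_lim_seq_plus'; auto. apply is_lim_seq_const. }
  pose proof (is_lim_seq_unique _ _ Lx1). rewrite (is_lim_seq_unique _ _ L2) in H.
  injection H as H.
  rewrite <- (exp_ln _ Gp1), <- H, Rplus_0_r, exp_plus, !exp_ln; auto. ring.
Qed.

Lemma Gamma_pos x : 0 < x -> 0 < Gamma x.
Proof. intros; apply Gamma_spec; auto. Qed.

Lemma series_b z w : 0 < z < 1 -> 0 < w ->
  ex_series (fun k => Gamma (w + INR k) * (z ^ k / INR (fact k))).
Proof.
  intros Hz Hw. apply ex_series_Rabs.
  assert (Hpos : forall k, 0 < Gamma (w + INR k) * (z ^ k / INR (fact k))).
  { intros k. apply Rmult_lt_0_compat. apply Gamma_pos. pose proof (pos_INR k); lra.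
    apply Rdiv_lt_0_compat. apply pow_lt; lra. apply INR_fact_pos. }
  apply (ex_series_DAlembert _ z); [lra| intros k; specialize (Hpos k); lra |].
  apply is_lim_seq_ext with (fun n => (1 + (w - 1) * / INR (S n)) * z).
  { intros n. rewrite Rabs_pos_eq.
    2:{ apply Rdiv_le_0_compat; [apply Rlt_le|]; apply Hpos. }
    rewrite S_INR at 2. replace (w + (INR n + 1)) with (w + INR n + 1) by ring.
    pose proof (pos_INR n).
    rewrite Gamma_succ by lra.
    replace (fact (S n)) with (S n * fact n)%nat by reflexivity.
    rewrite mult_INR. simpl (z ^ S n). rewrite S_INR.
    pose proof (Gamma_pos (w + INR n) ltac:(lra)). pose proof (INR_fact_pos n).
    pose proof (pow_lt z n ltac:(lra)).
    field. repeat split; lra. }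
  assert (H0 : is_lim_seq (fun n => / INR (S n)) 0).
  { exact (proj1 (is_lim_seq_incr_1 _ _) (is_lim_seq_inv _ _ is_lim_seq_INR ltac:(discriminate))). }
  pose proof (is_lim_seq_mult' _ _ _ _ (is_lim_seq_const (w - 1)) H0) as H1.
  pose proof (is_lim_seq_plus' _ _ _ _ (is_lim_seq_const 1) H1) as H2.
  pose proof (is_lim_seq_mult' _ _ _ _ H2 (is_lim_seq_const z)) as H3.
  replace ((1 + (w - 1) * 0) * z) with z in H3 by ring.
  exact H3.
Qed.

Section Abs.
Variable c : nat -> R.
Variable z M : R.
Hypothesis Hz : 0 < z < 1.
Hypothesis Hc : forall k, 0 < c k <= M * (z ^ k / INR (fact k)).

Definition X w := Series (fun k => c k * Gamma (w + INR k)).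

Lemma X_ex w : 0 < w -> ex_series (fun k => c k * Gamma (w + INR k)).
Proof.
  intros Hw. apply (ex_series_le (V := R_CompleteNormedModule) _ (fun k => M * (Gamma (w + INR k) * (z ^ k / INR (fact k))))).
  - intros n. change norm with Rabs. simpl. rewrite Rabs_pos_eq.
    + destruct (Hc n). pose proof (Gamma_pos (w + INR n)). pose proof (pos_INR n).
      specialize (H1 ltac:(lra)). nra.
    + destruct (Hc n). pose proof (Gamma_pos (w + INR n)). pose proof (pos_INR n).
      specialize (H1 ltac:(lra)). nra.
  - apply (ex_series_scal_l (V := R_NormedModule) M (fun k => Gamma (w + INR k) * (z ^ k / INR (fact k)))). apply series_b; auto.
Qed.

Lemma X_pos w : 0 < w -> 0 < X w.
Proof.
  intros Hw. unfold X. pose proof (X_ex w Hw) as He.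
  rewrite Series_incr_1; auto.
  assert (0 < c 0%nat * Gamma (w + INR 0)).
  { apply Rmult_lt_0_compat. apply Hc. apply Gamma_pos. simpl; lra. }
  assert (0 <= Series (fun k => c (S k) * Gamma (w + INR (S k)))).
  { rewrite <- (Rmult_0_l (Series (fun k => c (S k) * Gamma (w + INR (S k))))).
    rewrite <- Series_scal_l. apply Series_le.
    - intros n. split; [lra|]. rewrite Rmult_0_l. apply Rlt_le, Rmult_lt_0_compat. apply Hc.
      apply Gamma_pos. pose proof (pos_INR (S n)); lra.
    - apply ex_series_incr_1 in He. exact He. }
  lra.
Qed.

Lemma X_logconvex x y t : 0 < x -> 0 < y -> 0 <= t <= 1 ->
  ln (X (t * x + (1 - t) * y)) <= t * ln (X x) + (1 - t) * ln (X y).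
Proof.
  intros Hx Hy Ht.
  assert (Hm : 0 < t * x + (1 - t) * y).
  { destruct (Req_dec t 0). subst. lra. assert (0 < t) by lra. nra. }
  pose proof (X_pos x Hx) as Sx. pose proof (X_pos y Hy) as Sy.
  set (E := exp (t * ln (X x) + (1 - t) * ln (X y))).
  assert (HE : 0 < E) by apply exp_pos.
  rewrite <- (ln_exp (t * ln (X x) + (1 - t) * ln (X y))). fold E.
  apply ln_le. apply X_pos; auto.
  assert (Hterm : forall k, c k * Gamma (t * x + (1 - t) * y + INR k) <=
     (E * t / X x) * (c k * Gamma (x + INR k)) + (E * (1 - t) / X y) * (c k * Gamma (y + INR k))).
  { intros k. pose proof (pos_INR k).
    pose proof (Gamma_pos (x + INR k) ltac:(lra)) as Gx.
    pose proof (Gamma_pos (y + INR k) ltac:(lra)) as Gy.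
    pose proof (Gamma_pos (t * x + (1 - t) * y + INR k) ltac:(lra)) as Gm.
    pose proof (lnGamma_convex (x + INR k) (y + INR k) t ltac:(lra) ltac:(lra) Ht) as LC.
    replace (t * (x + INR k) + (1 - t) * (y + INR k)) with (t * x + (1 - t) * y + INR k) in LC by ring.
    assert (Gamma (t * x + (1 - t) * y + INR k) <=
            E * (t * (Gamma (x + INR k) / X x) + (1 - t) * (Gamma (y + INR k) / X y))).
    { rewrite <- (exp_ln _ Gm).
      apply Rle_trans with (exp (t * ln (Gamma (x + INR k)) + (1 - t) * ln (Gamma (y + INR k)))).
      { destruct (Rle_lt_or_eq_dec _ _ LC) as [Hl|He]. left; apply exp_increasing; auto. rewrite He; lra. }
      replace (t * ln (Gamma (x + INR k)) + (1 - t) * ln (Gamma (y + INR k))) with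
        ((t * ln (X x) + (1 - t) * ln (X y)) +
         (t * ln (Gamma (x + INR k) / X x) + (1 - t) * ln (Gamma (y + INR k) / X y))).
      2:{ rewrite !ln_div; auto. ring. }
      rewrite exp_plus. fold E. apply Rmult_le_compat_l; [lra|].
      pose proof (young t (ln (Gamma (x + INR k) / X x)) (ln (Gamma (y + INR k) / X y)) Ht).
      rewrite !exp_ln in H0; auto; apply Rdiv_lt_0_compat; auto. }
    destruct (Hc k) as [Hc1 _].
    apply Rle_trans with (c k * (E * (t * (Gamma (x + INR k) / X x) + (1 - t) * (Gamma (y + INR k) / X y)))).
    apply Rmult_le_compat_l; lra.
    right. field. lra. }
  apply Rle_trans with (Series (fun k => (E * t / X x) * (c k * Gamma (x + INR k)) + (E * (1 - t) / X y) * (c k * Gamma (y + INR k)))).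
  - apply Series_le.
    + intros n. split; [|apply Hterm]. apply Rlt_le, Rmult_lt_0_compat. apply Hc.
      apply Gamma_pos. pose proof (pos_INR n); lra.
    + apply (ex_series_plus (V := R_NormedModule)); apply (ex_series_scal_l (V := R_NormedModule)); apply X_ex; auto.
  - rewrite Series_plus, !Series_scal_l.
    + fold (X x). fold (X y). right. field. lra.
    + apply (ex_series_scal_l (V := R_NormedModule)); apply X_ex; auto.
    + apply (ex_series_scal_l (V := R_NormedModule)); apply X_ex; auto.
Qed.
End Abs.

Lemma ev_pos n (a C : nat -> R) : (forall i, (i < n)%nat -> 0 < C i) ->
  exists K, forall k, (K <= k)%nat -> forall i, (i < n)%nat -> 0 < a i + INR k * C i.
Proof.
  induction n; intros HC.
  - exists 0%nat. intros; lia.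
  - destruct IHn as [K1 HK1]. { intros; apply HC; lia. }
    pose proof (proj2 (is_lim_seq_spec _ _) is_lim_seq_INR (- a n / C n)) as [K2 HK2].
    exists (Nat.max K1 K2). intros k Hk i Hi.
    destruct (Nat.eq_dec i n) as [->|Hne].
    + specialize (HK2 k ltac:(lia)). pose proof (HC n ltac:(lia)).
      assert (- a n / C n * C n < INR k * C n) by (apply Rmult_lt_compat_r; auto).
      replace (- a n / C n * C n) with (- a n) in H0 by (field; lra). lra.
    + apply HK1; lia.
Qed.

Lemma mlog x1 x0 x2 : 0 < x0 -> 0 < x1 -> 0 < x2 ->
  ln x1 <= 1/2 * ln x0 + (1 - 1/2) * ln x2 -> x0 * x2 - x1 ^ 2 >= 0.
Proof.
  intros H0 H1 H2 H.
  assert (ln (x1 * x1) <= ln (x0 * x2)) by (rewrite !ln_mult; auto; lra).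
  assert (x1 * x1 <= x0 * x2).
  { rewrite <- (exp_ln (x1 * x1)), <- (exp_ln (x0 * x2)) by (apply Rmult_lt_0_compat; auto).
    destruct (Rle_lt_or_eq_dec _ _ H3) as [Hl|He]. left; apply exp_increasing; auto. rewrite He; lra. }
  simpl. lra.
Qed.

Theorem theorem5 (p q : nat) (alpha A : nat -> R) (beta B : nat -> R)
  (hA : forall i, (i < p)%nat -> 0 < A i)
  (hB : forall j, (j < q)%nat -> 0 < B j)
  (hcond : sumR q beta - sumR p alpha + (INR p - INR q) / 2 > 0)
  (hsum : sumR p A = sumR q B)
  (psi : nat -> nat -> R)
  (hpsi : forall n m, psi n m =
      prodR p (fun i => Gamma (alpha i + (INR n + INR m) * A i))
      / prodR q (fun j => Gamma (beta j + (INR n + INR m) * B j)))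
  (h1 : forall n, psi n 2%nat < psi n 1%nat)
  (h2 : forall n, (psi n 1%nat) ^ 2 < psi n 0%nat * psi n 2%nat) :
  let Xi := fun (z sigma : R) =>
    FoxWright (S p) q (shift_param sigma alpha) (shift_param 1 A) beta B z in
  (forall z, 0 < z < 1 -> log_convex_on (fun s => 0 < s) (Xi z)) /\
  (forall z sigma, 0 < z < 1 -> 0 < sigma ->
     Xi z sigma * Xi z (sigma + 2) - (Xi z (sigma + 1)) ^ 2 >= 0).
Proof.
  intros Xi.
  set (f := fun k => psi k 0%nat).
  assert (Hf : forall n m, psi n m = f (n + m)%nat).
  { intros. unfold f. rewrite !hpsi, plus_INR. simpl (INR 0). rewrite Rplus_0_r. reflexivity. }
  assert (h1' : forall n, f (S (S n)) < f (S n)).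
  { intros n. pose proof (h1 n). rewrite !Hf in H.
    replace (n + 2)%nat with (S (S n)) in H by lia. replace (n + 1)%nat with (S n) in H by lia. exact H. }
  assert (h2' : forall n, f (S n) ^ 2 < f n * f (S (S n))).
  { intros n. pose proof (h2 n). rewrite !Hf in H.
    replace (n + 2)%nat with (S (S n)) in H by lia. replace (n + 1)%nat with (S n) in H by lia.
    replace (n + 0)%nat with n in H by lia. exact H. }
  assert (Hfe : forall k, f k = prodR p (fun i => Gamma (alpha i + INR k * A i))
                  / prodR q (fun j => Gamma (beta j + INR k * B j))).
  { intros k. unfold f. rewrite hpsi. simpl (INR 0). rewrite Rplus_0_r. reflexivity. }
  assert (Hev : exists K, forall k, (K <= k)%nat -> 0 < f k).
  { destruct (ev_pos p alpha A hA) as [K1 HK1]. destruct (ev_pos q beta B hB) as [K2 HK2].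
    exists (Nat.max K1 K2). intros k Hk. rewrite Hfe. apply Rdiv_lt_0_compat; apply prodR_pos.
    - intros i Hi. apply Gamma_pos. apply HK1; auto; lia.
    - intros i Hi. apply Gamma_pos. apply HK2; auto; lia. }
  assert (Hfp : forall k, 0 < f k).
  { destruct Hev as [K HK].
    assert (forall j k, 0 < f (k + 2 * j)%nat -> 0 < f k).
    { induction j; intros k Hk.
      - replace (k + 2 * 0)%nat with k in Hk by lia. exact Hk.
      - assert (0 < f (S (S k))). { apply IHj. replace (S (S k) + 2 * j)%nat with (k + 2 * S j)%nat by lia. exact Hk. }
        pose proof (h2' k). pose proof (pow2_ge_0 (f (S k))).
        destruct (Rlt_or_le 0 (f k)) as [|Hn]; auto.
        assert (f k * f (S (S k)) <= 0) by nra. lra. }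
    intros k. apply (H K k). apply HK. lia. }
  assert (Hfb : forall k, f k <= f 0%nat + f 1%nat).
  { assert (forall n, f (S n) <= f 1%nat).
    { induction n. lra. pose proof (h1' n). lra. }
    intros [|k]. pose proof (Hfp 1%nat). lra. pose proof (H k). pose proof (Hfp 0%nat). lra. }
  assert (HX : forall z w, Xi z w = X (fun k => f k * (z ^ k / INR (fact k))) w).
  { intros z w. unfold Xi, FoxWright, X. apply Series_ext. intros k.
    rewrite prodR_front. simpl shift_param. rewrite Hfe. rewrite Rmult_1_r. unfold Rdiv. ring. }
  assert (Hc : forall z, 0 < z < 1 -> forall k, 0 < f k * (z ^ k / INR (fact k)) <=
                 (f 0%nat + f 1%nat) * (z ^ k / INR (fact k))).
  { intros z Hz k. assert (0 < z ^ k / INR (fact k)).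
    { apply Rdiv_lt_0_compat. apply pow_lt; lra. apply INR_fact_pos. }
    pose proof (Hfp k). pose proof (Hfb k). split. nra. nra. }
  split.
  - intros z Hz. split.
    + intros x Hx. rewrite HX. apply (X_pos _ z (f 0%nat + f 1%nat)); auto.
    + intros x y t Hx Hy Ht. rewrite !HX. apply (X_logconvex _ z (f 0%nat + f 1%nat)); auto.
  - intros z sigma Hz Hs. rewrite !HX.
    apply mlog; try (apply (X_pos _ z (f 0%nat + f 1%nat)); auto; lra).
    replace (sigma + 1) with (1/2 * sigma + (1 - 1/2) * (sigma + 2)) by field.
    apply (X_logconvex _ z (f 0%nat + f 1%nat)); auto; lra.
Qed.
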